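(* Let $\mathbb{F}$ be a field and $n\ge1$. For every $A\in M(n,\mathbb{F})$ we have $A\sim_{M(n,\mathbb{F})} A_s$. In particular, $A\sim_{M(n,\mathbb{F})} 0$ for every nilpotent $A\in M(n,\mathbb{F})$.
   Context: $M(n,\mathbb{F})$ denotes the semigroup of all $n\times n$ matrices over $\mathbb{F}$ under matrix multiplication, identified with linear operators on $\mathbb{F}^n$. Two elements $a,b$ of a semigroup $S$ are primarily $S$-conjugated if there are $x,y\in S$ with $a=xy$ and $b=yx$; $\sim_S$ is the transitive closure of primary $S$-conjugacy. For $A\in M(n,\mathbb{F})$ let $t\ge 0$ be such that $A^t(\mathbb{F}^n)=A^{t+i}(\mathbb{F}^n)$ for all $i\ge 0$; then $\mathbb{F}^n=A^t(\mathbb{F}^n)\oplus\ker(A^t)$, and $A_s$ is the linear operator with $A_s(v)=A(v)$ for $v\in A^t(\mathbb{F}^n)$ and $A_s(v)=0$ for $v\in\ker(A^t)$. *)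

(* Defs.v *)
From HB Require Import structures.
From mathcomp Require Import all_boot all_order all_algebra.
From Stdlib Require Import Relations.
Set Implicit Arguments. Unset Strict Implicit. Unset Printing Implicit Defensive.
Import GRing.Theory.
Local Open Scope ring_scope.

Definition prim_conj (F : fieldType) (n : nat) (a b : 'M[F]_n) : Prop :=
  exists x y : 'M[F]_n, a = x *m y /\ b = y *m x.

Definition mconj (F : fieldType) (n : nat) : relation 'M[F]_n :=
  clos_trans _ (@prim_conj F n).

Definition in_img (F : fieldType) (n : nat) (M : 'M[F]_n) (v : 'cV[F]_n) : Prop :=
  exists w : 'cV[F]_n, v = M *m w.

Definition is_As (F : fieldType) (n : nat) (A B : 'M[F]_n) : Prop :=
  exists t : nat,
    (forall i : nat, forall v, in_img (A ^+ t) v <-> in_img (A ^+ (t + i)) v) /\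
    (forall v, in_img (A ^+ t) v -> B *m v = A *m v) /\
    (forall v : 'cV[F]_n, A ^+ t *m v = 0 -> B *m v = 0).

(* Main.v *)
Require Import Defs.
From HB Require Import structures.
From mathcomp Require Import all_boot all_order all_algebra.
From Stdlib Require Import Relations.
Local Open Scope ring_scope.
Import GRing.Theory.

Section Aux.
Variables (F : fieldType) (n : nat).
Implicit Types (A B P : 'M[F]_n).

Lemma prim_sym A B : prim_conj A B -> prim_conj B A.
Proof. by case=> x [y [-> ->]]; exists y, x. Qed.

Lemma mx_ext A B : (forall v : 'cV[F]_n, B *m v = A *m v) -> B = A.
Proof.
move=> H; apply/matrixP => i j.
have := congr1 (fun M : 'cV[F]_n => M i 0) (H (delta_mx j 0)).
rewrite !mxE.
rewrite (bigD1 j) //= [in RHS](bigD1 j) //= !mxE !eqxx mulr1.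
rewrite /= mulr1 !big1 ?addr0 // => k /negbTE kj; by rewrite mxE kj mulr0.
Qed.

Lemma mulE A B : A *m B = A * B.
Proof. by rewrite mulmxE. Qed.

Lemma powS A k : A ^+ k.+1 = A *m A ^+ k.
Proof. by rewrite exprS mulmxE. Qed.

Lemma powSr A k : A ^+ k.+1 = A ^+ k *m A.
Proof. by rewrite exprSr mulmxE. Qed.

Lemma decomp A s : (forall v, in_img (A ^+ s) v -> in_img (A ^+ (s + s)) v) ->
  forall w : 'cV[F]_n, exists z, A ^+ s *m (w - A ^+ s *m z) = 0.
Proof.
move=> H w; have [z Hz] := H (A ^+ s *m w) (ex_intro _ w erefl).
exists z; rewrite mulmxBr mulmxA mulE -exprD -Hz; exact: subrr.
Qed.

Lemma Bw A B s : (forall v, in_img (A ^+ s) v -> in_img (A ^+ (s + s)) v) ->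
  (forall v, in_img (A ^+ s) v -> B *m v = A *m v) ->
  (forall v : 'cV[F]_n, A ^+ s *m v = 0 -> B *m v = 0) ->
  forall w : 'cV[F]_n, exists z : 'cV[F]_n,
    A ^+ s *m (w - A ^+ s *m z) = 0 /\ B *m w = A *m (A ^+ s *m z).
Proof.
move=> Hs Hag Hk w; have [z Hz] := @decomp A s Hs w; exists z; split => //.
have -> : w = (w - A ^+ s *m z) + A ^+ s *m z by rewrite subrK.
rewrite mulmxDr (Hk _ Hz) add0r Hag; last by exists z.
by [].
Qed.

Lemma powP A P k : P *m A = A -> (A *m P) ^+ k.+1 = A ^+ k.+1 *m P.
Proof.
move=> PA; elim: k => [|k IH]; first by rewrite !expr1.
rewrite powS IH [in RHS]powS -!mulmxA; congr (_ *m _).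
by rewrite mulmxA powS mulmxA PA.
Qed.

Lemma main t : forall A B,
 (forall i (v : 'cV[F]_n), in_img (A ^+ t.+1) v <-> in_img (A ^+ (t.+1 + i)) v) ->
 (forall v : 'cV[F]_n, in_img (A ^+ t.+1) v -> B *m v = A *m v) ->
 (forall v : 'cV[F]_n, A ^+ t.+1 *m v = 0 -> B *m v = 0) -> mconj A B.
Proof.
elim: t => [|t IH] A B Hst Hag Hk.
  have -> : B = A.
    apply: mx_ext => w.
    have [z [H1 H2]] := @Bw A B 1%N (fun v => proj1 (Hst 1%N v)) Hag Hk w.
    rewrite H2; move: H1; rewrite expr1 => H1.
    by rewrite -[w in RHS](subrK (A *m z)) mulmxDr H1 add0r.
  by apply: t_step; exists 1%:M, A; rewrite mul1mx mulmx1.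
have [G AGA] : exists G : 'M[F]_n, A *m G *m A = A.
  by exists (pinvmx A); rewrite mulmxKpV.
have [P [PA PAG]] : exists P : 'M[F]_n, P *m A = A /\ P = A *m G by exists (A *m G).
have HS : forall k (v : 'cV[F]_n),
    in_img ((A *m P) ^+ k.+1) v <-> in_img (A ^+ k.+2) v.
  move=> k v; rewrite powP // /in_img; split.
    by case=> w ->; exists (G *m w); rewrite PAG [in RHS]powSr !mulmxA.
  case=> w ->; exists (A *m w).
  by rewrite [in LHS]powSr -!mulmxA [P *m (A *m w)]mulmxA PA.
have Hst' : forall v, in_img (A ^+ t.+2) v -> in_img (A ^+ (t.+2 + t.+2)) v.
  by move=> v /(Hst t.+2 v).
apply: (@t_trans _ _ A (A *m P) B).
  by apply: t_step; exists P, A.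
apply: (@t_trans _ _ (A *m P) (B *m P) B).
  apply: (IH (A *m P) (B *m P)).
  - move=> i v; rewrite addSn; split => H.
      apply (proj2 (HS (t + i)%N v)); rewrite -!addSn.
      apply (proj1 (Hst i v)); exact: (proj1 (HS t v)).
    apply (proj2 (HS t v)); apply (proj2 (Hst i v)); rewrite !addSn.
    exact: (proj1 (HS (t + i)%N v)).
  - move=> v /HS [w Hw].
    have Pv : P *m v = v by rewrite Hw powS !mulmxA PA.
    rewrite -mulmxA Pv Hag; last by rewrite Hw; exists w.
    by rewrite -mulmxA Pv.
  - move=> v; rewrite powP // -mulmxA => H0.
    rewrite -mulmxA; apply: Hk.
    by rewrite powS -mulmxA H0 mulmx0.
apply: t_step; exists B, P; split => //.
apply: mx_ext => w; rewrite -mulmxA.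
have [z [_ ->]] := @Bw A B t.+2 Hst' Hag Hk w.
by rewrite [in RHS]mulmxA PA.
Qed.

End Aux.

Theorem lemma2 (F : fieldType) (n : nat) (hn : (1 <= n)%N) :
  (forall A As : 'M[F]_n, is_As A As -> mconj A As) /\
  (forall A : 'M[F]_n, (exists k : nat, A ^+ k = 0) -> mconj A 0).
Proof.
have P1 : forall A As : 'M[F]_n, is_As A As -> mconj A As.
  move=> A B [[|t] [Hst [Hag Hk]]]; last exact: main Hst Hag Hk.
  have -> : B = A.
    apply: mx_ext => v; apply: Hag; exists v; by rewrite expr0 mul1mx.
  by apply: t_step; exists 1%:M, A; rewrite mul1mx mulmx1.
split=> // A [k Ak]; apply: P1; exists k; split; [|split].
- move=> i v; rewrite exprD Ak mul0r; done.
- by move=> v [w ->]; rewrite Ak !mul0mx mulmx0.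
- by move=> v _; rewrite mul0mx.
Qed.
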